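(* Suppose $n\ge 2$, all buyers are additive, and the seller uses the max tie-breaking rule. Then for any selling-order function, the sequential first-price auction has a pure optimistic conservative subgame perfect equilibrium, and in every pure optimistic conservative subgame perfect equilibrium each item $j$ is allocated to a buyer $w\in\arg\max_i v_{i,j}$ at price $\max_{i\neq w}v_{i,j}$ (the second-highest valuation).
   Context: Setting: a set $M$ of $m$ items and a set $N$ of $n$ buyers; buyer $i$ is additive with values $v_{i,j}\ge 0$, $v_i(S)=\sum_{j\in S}v_{i,j}$, and quasi-linear utility. Items are sold one at a time, each by a sealed-bid first-price auction without reserve price: each buyer submits a nonnegative bid, a highest bidder wins and pays his bid. The seller fixes a selling-order function (the next item depends on the allocation of items sold so far) and a tie-breaking rule. Max tie-breaking rule: when a set $T$ of buyers tie with the highest bid on item $j$, the item goes to a buyer in $\arg\max_{i\in T}v_{i,j}$. Full information. Game-tree nodes are identified with the allocation of the items sold so far (which buyer won which item), and strategies depend on history only through this allocation. A pure subgame perfect equilibrium (SPE) is a profile of pure strategies that is a Nash equilibrium in every subgame. Optimistic conservative bidding: at a node $h$ where item $j$ is sold and buyer $i$ holds the set $X_i(h)$, let $U_i(h)$ be buyer $i$'s utility from the items sold from $h$ onward (increase in his value minus his payments for those items) when everybody follows the profile from $h$, and let $h^{j\to i}$ be the node reached when $j$ is allocated to $i$. A bid $b$ of buyer $i$ on $j$ at $h$ is optimistic conservative if $v_i(X_i(h)\cup\{j\})-v_i(X_i(h))-b+U_i(h^{j\to i})\ge U_i(h)$, i.e. winning with this bid would not leave $i$ worse off than the equilibrium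 path. A pure optimistic conservative SPE is a pure SPE in which every bid at every node (on or off the equilibrium path) is optimistic conservative. *)

(* Defs.v *)
From HB Require Import structures.
From mathcomp Require Import all_boot all_order all_algebra.
From mathcomp Require Import reals.
Set Implicit Arguments. Unset Strict Implicit. Unset Printing Implicit Defensive.
Import Order.TTheory GRing.Theory Num.Theory.
Local Open Scope ring_scope.

Section Auction.
Variables (R : realType) (N M : finType).
(* v i j = value of buyer i for item j (additive valuations) *)
Variable v : N -> M -> R.

(* A game-tree node = allocation of the items sold so far:
   h j = Some i if item j was sold to buyer i, None if j is unsold. *)
Definition alloc := {ffun M -> option N}.
Definition root_node : alloc := [ffun _ => None].
Definition unsold (h : alloc) : {set M} := [set j | h j == None].
Definition upd (h : alloc) (j : M) (i : N) : alloc :=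
  [ffun k => if k == j then Some i else h k].

Definition valid_order (ord : alloc -> M) : Prop :=
  forall h, unsold h != set0 -> ord h \in unsold h.

(* tie-breaking rule tb h j T : winner of item j at node h among the set T of
   tied highest bidders.  Max tie-breaking rule: *)
Definition max_tiebreak (tb : alloc -> M -> {set N} -> N) : Prop :=
  forall h j T, T != set0 ->
    tb h j T \in T /\ (forall i, i \in T -> v i j <= v (tb h j T) j).

Variables (ord : alloc -> M) (tb : alloc -> M -> {set N} -> N).

(* pure strategy profile: b i h = bid of buyer i on item ord h at node h *)
Definition profile := N -> alloc -> R.
Definition valid_strategy (s : alloc -> R) : Prop := forall h, 0 <= s h.
Definition valid_profile (b : profile) : Prop := forall i, valid_strategy (b i).

Definition top_bidders (b : profile) (h : alloc) : {set N} :=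
  [set i | [forall k, b k h <= b i h]].
Definition winner (b : profile) (h : alloc) : N :=
  tb h (ord h) (top_bidders b h).

(* outcome from node h when everybody follows b:
   sequence of (item, winner, price), one entry per remaining item *)
Fixpoint outcome_fuel (b : profile) (k : nat) (h : alloc) : seq (M * N * R) :=
  if k is k'.+1 then
    let j := ord h in let w := winner b h in
    (j, w, b w h) :: outcome_fuel b k' (upd h j w)
  else [::].
Definition outcome (b : profile) (h : alloc) := outcome_fuel b #|unsold h| h.

Definition U (b : profile) (i : N) (h : alloc) : R :=
  \sum_(x <- outcome b h | x.1.2 == i) (v i x.1.1 - x.2).

Inductive reachable : alloc -> Prop :=
| reach_root : reachable root_node
| reach_step h i : reachable h -> unsold h != set0 ->
    reachable (upd h (ord h) i).

Definition set_strat (b : profile) (i : N) (s : alloc -> R) : profile :=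
  fun k => if k == i then s else b k.

Definition NE_at (b : profile) (h : alloc) : Prop :=
  forall i (s : alloc -> R), valid_strategy s ->
    U (set_strat b i s) i h <= U b i h.

Definition SPE (b : profile) : Prop :=
  valid_profile b /\ forall h, reachable h -> NE_at b h.

(* every bid at every node is optimistic conservative; by additivity
   v_i(X_i(h) u {j}) - v_i(X_i(h)) = v i j since j is unsold at h *)
Definition optimistic_conservative (b : profile) : Prop :=
  forall h, reachable h -> unsold h != set0 -> forall i,
    v i (ord h) - b i h + U b i (upd h (ord h) i) >= U b i h.

Definition OC_SPE (b : profile) : Prop := SPE b /\ optimistic_conservative b.

End Auction.

(* Main.v *)
Require Import Defs.
From HB Require Import structures.
From mathcomp Require Import all_boot all_order all_algebra.
From mathcomp Require Import reals.
From mathcomp Require Import lra.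
Import Order.TTheory GRing.Theory Num.Theory.
Local Open Scope ring_scope.
Set Implicit Arguments. Unset Strict Implicit. Unset Printing Implicit Defensive.

Section Proofs.
Variables (R : realType) (N M : finType) (v : N -> M -> R).
Variables (ord : alloc N M -> M) (tb : alloc N M -> M -> {set N} -> N).
Hypothesis hN : (1 < #|N|)%N.
Hypothesis hv : forall i j, 0 <= v i j.
Hypothesis hord : valid_order ord.
Hypothesis htb : max_tiebreak v tb.

Definition o (i : N) (j : M) : R := \big[Order.max/0]_(k | k != i) v k j.
Definition g (i : N) (j : M) : R := Order.max 0 (v i j - o i j).
Definition C (i : N) (S : {set M}) : R := \sum_(j in S) g i j.

Lemma o_ge i j k : k != i -> v k j <= o i j.
Proof. by move=> ki; rewrite /o; apply: le_bigmax_cond. Qed.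

Lemma o_att i j : exists2 k, k != i & o i j = v k j.
Proof.
have : exists k, k != i.
  have : (0 < #|predC1 i|)%N by rewrite cardC1; move: hN; case: #|N| => [|[]].
  by case/card_gt0P=> k; exists k.
case=> k ki; rewrite /o.
have [k0 Pk0 ->] := @eq_bigmax _ R N 0 k (fun x => x != i) (fun x => v x j) ki
   (fun x _ => hv x j).
by exists k0.
Qed.

Lemma o_ge0 i j : 0 <= o i j.
Proof. by have [k _ ->] := o_att i j. Qed.

Lemma unsold_upd (h : alloc N M) j i : unsold (upd h j i) = unsold h :\ j.
Proof.
apply/setP=> x; rewrite !inE /upd ffunE.
by case: (x =P j).
Qed.


Lemma someN : exists i : N, true.
Proof. by have /card_gt0P [k _] : (0 < #|N|)%N by apply: ltn_trans hN. Qed.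

Implicit Types (b : profile R N M) (h : alloc N M).

Lemma top_ne b h : top_bidders b h != set0.
Proof.
have [i0 _] := someN.
case: (@arg_maxP _ R N i0 xpredT (fun k => b k h) isT) => k _ Hk.
by apply/set0Pn; exists k; rewrite inE; apply/forallP => x; exact: Hk.
Qed.

Local Notation w := (winner ord tb).

Lemma winner_top b h : w b h \in top_bidders b h /\ forall i, i \in top_bidders b h -> v i (ord h) <= v (w b h) (ord h).
Proof. exact: htb (top_ne b h). Qed.

Lemma winner_max b h k : b k h <= b (w b h) h.
Proof. by have [/[!inE] /forallP H _] := winner_top b h; apply: H. Qed.

Lemma winner_unique b h i : (forall k, k != i -> b k h < b i h) -> w b h = i.
Proof.
move=> H; apply/eqP; apply/negPn/negP => /H lt.
by have := winner_max b h i; rewrite leNgt lt.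
Qed.

Lemma card_upd h k : unsold h != set0 ->
  #|unsold h| = #|unsold (upd h (ord h) k)|.+1.
Proof. by move=> ne; rewrite unsold_upd (cardsD1 (ord h)) (hord ne). Qed.

Lemma outcome_step b h : unsold h != set0 ->
  outcome ord tb b h = (ord h, w b h, b (w b h) h) :: outcome ord tb b (upd h (ord h) (w b h)).
Proof.
move=> ne; rewrite /outcome.
have -> : #|unsold h| = #|unsold (upd h (ord h) (w b h))|.+1.
  by rewrite unsold_upd (cardsD1 (ord h)) (hord ne).
by [].
Qed.

Lemma outcome_empty b h : unsold h = set0 -> outcome ord tb b h = [::].
Proof. by move=> E; rewrite /outcome E cards0. Qed.

Lemma U_step b i h : unsold h != set0 ->
  U v ord tb b i h = (if w b h == i then v i (ord h) - b (w b h) h else 0)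
     + U v ord tb b i (upd h (ord h) (w b h)).
Proof.
move=> ne; rewrite /U outcome_step // big_cons /=.
by case: eqP => _ //; rewrite add0r.
Qed.

Lemma U_empty b i h : unsold h = set0 -> U v ord tb b i h = 0.
Proof. by move=> E; rewrite /U outcome_empty // big_nil. Qed.

Lemma C_step i h k : unsold h != set0 ->
  C i (unsold h) = g i (ord h) + C i (unsold (upd h (ord h) k)).
Proof.
move=> ne; rewrite unsold_upd /C (bigD1 (ord h)) ?(hord ne) //=; congr (_ + _).
by apply: eq_bigl => x; rewrite !inE andbC.
Qed.

Lemma outcome_ext n : forall h b b',
  (forall h', unsold h' \subset unsold h -> forall k, b k h' = b' k h') ->
  outcome_fuel ord tb b n h = outcome_fuel ord tb b' n h.
Proof.
elim: n => [//|n IH] h b b' E /=.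
have Ew : w b h = w b' h.
  rewrite /winner /top_bidders; congr (tb _ _ _); apply/setP=> x; rewrite !inE.
  by apply: eq_forallb => y; rewrite !E.
rewrite Ew E // (IH _ b b') //.
move=> h' sub k; apply: E; apply: subset_trans sub _.
by rewrite unsold_upd subD1set.
Qed.


Lemma sub_min_g i j : v i j - Order.min (v i j) (o i j) = g i j.
Proof.
rewrite /g; have [H|H] := leP (v i j) (o i j).
  by rewrite subrr max_l // subr_le0.
by rewrite max_r // subr_ge0; exact: ltW.
Qed.

Lemma g_zero i j : v i j <= o i j -> g i j = 0.
Proof. by move=> H; rewrite /g max_l // subr_le0. Qed.

Lemma g_ge0 i j : 0 <= g i j.
Proof. by rewrite /g le_max lexx. Qed.

Definition bstar : profile R N M := fun i h => Order.min (v i (ord h)) (o i (ord h)).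

Lemma bstar_loser h i : w bstar h != i -> v i (ord h) <= o i (ord h).
Proof.
move=> ne; rewrite leNgt; apply/negP => lt.
have bi : bstar i h = o i (ord h) by rewrite /bstar (min_r (ltW lt)).
have bk : forall k, k != i -> bstar k h <= o i (ord h).
  by move=> k ki; rewrite /bstar ge_min o_ge.
have top : i \in top_bidders bstar h.
  rewrite inE; apply/forallP => k; rewrite bi.
  by case: (k =P i) => [->|/eqP ki]; [rewrite -bi|exact: bk].
have [_ H] := winner_top bstar h.
have := H i top.
have := o_ge (ord h) ne; rewrite eq_sym in ne.
move=> a b; have := le_trans b a; by rewrite leNgt lt.
Qed.

Lemma U_bstar n : forall h i, #|unsold h| = n -> U v ord tb bstar i h = C i (unsold h).
Proof.
elim: n => [|n IH] h i E.
  have E0 : unsold h = set0 by apply/eqP; rewrite -cards_eq0 E.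
  by rewrite U_empty // E0 /C big_set0.
have ne : unsold h != set0 by rewrite -card_gt0 E.
rewrite U_step // (C_step i (w bstar h) ne) IH; last first.
  by move: E; rewrite (card_upd (w bstar h) ne); case.
congr (_ + _); case: eqP => [<-|/eqP ne']; first by rewrite sub_min_g.
by rewrite g_zero // bstar_loser.
Qed.

Lemma U_dev n : forall h i b', #|unsold h| = n ->
  (forall k, k != i -> b' k = bstar k) -> U v ord tb b' i h <= C i (unsold h).
Proof.
elim: n => [|n IH] h i b' E Hb.
  have E0 : unsold h = set0 by apply/eqP; rewrite -cards_eq0 E.
  by rewrite U_empty // E0 /C big_set0.
have ne : unsold h != set0 by rewrite -card_gt0 E.
rewrite U_step // (C_step i (w b' h) ne); apply: lerD; last first.
  apply: IH => //.
  by move: E; rewrite (card_upd (w b' h) ne); case.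
case: eqP => [wi|_]; last exact: g_ge0.
rewrite -sub_min_g lerB // wi.
have [k ki ok] := o_att i (ord h).
have := winner_max b' h k; rewrite wi (Hb k ki) /bstar => H; apply: le_trans H.
rewrite le_min; apply/andP; split.
  by rewrite -ok ge_min lexx orbT.
rewrite ge_min; apply/orP; left.
by apply: o_ge; rewrite eq_sym.
Qed.

Lemma bstar_OC : OC_SPE v ord tb bstar.
Proof.
split; first split.
- by move=> i h; rewrite /bstar le_min hv o_ge0.
- move=> h _ i s _; rewrite (U_bstar _ erefl); apply: (U_dev erefl).
  by move=> k ki; rewrite /set_strat (negbTE ki).
- move=> h _ ne i; rewrite (U_bstar _ erefl) (U_bstar _ erefl) (C_step i i ne).
  by rewrite /bstar sub_min_g.
Qed.


Definition dev b i (x : R) h : profile R N M :=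
  set_strat b i (fun h' => if h' == h then x else b i h').

Lemma dev_at b i x h k : dev b i x h k h = if k == i then x else b k h.
Proof. by rewrite /dev /set_strat; case: (k =P i) => _ //=; rewrite eqxx. Qed.

Lemma U_dev_step b i x h : unsold h != set0 ->
  U v ord tb (dev b i x h) i h =
  (if w (dev b i x h) h == i then v i (ord h) - x else 0)
  + U v ord tb b i (upd h (ord h) (w (dev b i x h) h)).
Proof.
move=> ne; rewrite U_step //; congr (_ + _).
  by case: eqP => // ->; rewrite dev_at eqxx.
rewrite /U /outcome (@outcome_ext _ _ _ b) //.
move=> h' sub k.
have nh : h' != h.
  apply/eqP => E; move: sub; rewrite E unsold_upd => /subsetP /(_ _ (hord ne)).
  by rewrite !inE eqxx.
by rewrite /dev /set_strat; case: (k =P i) => [->|_] //=; rewrite (negbTE nh).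
Qed.

Section Uniq.
Variable b : profile R N M.
Hypothesis hb : OC_SPE v ord tb b.

Lemma uniq_main n : forall h, reachable ord h -> #|unsold h| = n ->
  (forall i, U v ord tb b i h = C i (unsold h)) /\
  (forall j k p, (j, k, p) \in outcome ord tb b h -> o k j <= v k j /\ p = o k j).
Proof.
have [[valid spe] oc] := hb.
elim: n => [|n IH] h rh E.
  have E0 : unsold h = set0 by apply/eqP; rewrite -cards_eq0 E.
  by split=> [i|j k p]; rewrite ?U_empty ?outcome_empty // E0 /C big_set0.
have ne : unsold h != set0 by rewrite -card_gt0 E.
set j := ord h; set wn := w b h; set p := b wn h.
have IHk : forall k, (forall i, U v ord tb b i (upd h j k) = C i (unsold h :\ j)) /\
  (forall j' k' p', (j', k', p') \in outcome ord tb b (upd h j k) -> o k' j' <= v k' j' /\ p' = o k' j').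
  move=> k; have Ek : #|unsold (upd h j k)| = n by move: E; rewrite (card_upd k ne); case.
  have [H1 H2] := IH (upd h j k) (reach_step k rh ne) Ek.
  by split=> // i; rewrite H1 unsold_upd.
have F1 : forall i, U v ord tb b i h = (if wn == i then v i j - p else 0) + C i (unsold h :\ j).
  by move=> i; rewrite U_step // (IHk _).1.
have p0 : 0 <= p by apply: valid.
have F2 : forall i x, 0 <= x ->
   (if w (dev b i x h) h == i then v i j - x else 0) <= (if wn == i then v i j - p else 0).
  move=> i x x0.
  have := spe h rh i (fun h' => if h' == h then x else b i h').
  rewrite -/(dev b i x h) U_dev_step // F1 (IHk _).1 => H.
  rewrite -(lerD2r (C i (unsold h :\ j))); apply: H.
  by move=> h'; case: eqP => // _; apply: valid.
have F3 : forall i, i != wn -> b i h <= v i j.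
  move=> i ni; have := oc h rh ne i; rewrite -/j (IHk i).1 F1 eq_sym (negbTE ni) add0r.
  by rewrite lerDr subr_ge0.
have Fa : forall i, i != wn -> v i j <= p.
  move=> i ni; rewrite leNgt; apply/negP => lt.
  set x := (p + v i j) / 2.
  have wi : w (dev b i x h) h = i.
    apply: winner_unique => k ki; rewrite !dev_at eqxx (negbTE ki).
    apply: le_lt_trans (winner_max b h k) _; rewrite -/wn -/p /x; lra.
  have := F2 i x; rewrite wi eqxx eq_sym (negbTE ni) /x => H.
  have : v i j - (p + v i j) / 2 <= 0 by apply: H; lra.
  lra.
have Fb : exists2 i, i != wn & b i h = p.
  have [k0 k0n _] := o_att wn j.
  case: (boolP [exists i, (i != wn) && (b i h == p)]).
    by case/existsP => i /andP [ni /eqP e]; exists i.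
  rewrite negb_exists => /forallP Hn.
  have ltp : forall i, i != wn -> b i h < p.
    move=> i ni; rewrite lt_neqAle winner_max andbT.
    by have := Hn i; rewrite ni.
  set m := \big[Order.max/0]_(k | k != wn) b k h.
  have m0 : 0 <= m by apply: le_trans (valid k0 h) _; apply: le_bigmax_cond.
  have mk : forall k, k != wn -> b k h <= m by move=> k kn; apply: le_bigmax_cond.
  have mp : m < p.
    apply/bigmax_ltP; split=> //.
    by apply: le_lt_trans (valid k0 h) (ltp _ k0n).
  set x := (m + p) / 2.
  have ww : w (dev b wn x h) h = wn.
    apply: winner_unique => k kn; rewrite !dev_at eqxx (negbTE kn).
    by apply: le_lt_trans (mk _ kn) _; rewrite /x; lra.
  have := F2 wn x; rewrite ww eqxx /x => H.
  have : v wn j - (m + p) / 2 <= v wn j - p by apply: H; lra.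
  lra.
have Fc : p <= v wn j.
  have := F2 wn 0 (lexx 0); rewrite eqxx.
  case: eqP => _ H; first by apply: le_trans (hv wn j); lra.
  lra.
have [i0 i0n i0p] := Fb.
have vi0 : v i0 j = p by apply/le_anti; rewrite Fa // -i0p F3.
have op : o wn j = p.
  apply/le_anti/andP; split.
    by apply/bigmax_leP; split=> // k kn; apply: Fa.
  by rewrite -vi0; apply: o_ge.
split.
  move=> i; rewrite F1 (C_step i wn ne) unsold_upd; congr (_ + _).
  case: eqP => [<-|/eqP ni].
    by rewrite /g -/j op max_r // subr_ge0.
  rewrite g_zero // (le_trans (Fa _ _)) //; first by rewrite eq_sym.
  apply: le_trans Fc _; apply: o_ge; done.
move=> j' k' p'; rewrite outcome_step // in_cons => /orP [/eqP [-> -> ->]|].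
  by rewrite -/j -/wn -/p op.
exact: (IHk wn).2.
Qed.

End Uniq.

Lemma cover b n : forall h, #|unsold h| = n -> forall j, j \in unsold h ->
  exists k p, (j, k, p) \in outcome ord tb b h.
Proof.
elim: n => [|n IH] h E j ju.
  have E0 : unsold h = set0 by apply/eqP; rewrite -cards_eq0 E.
  by rewrite E0 inE in ju.
have ne : unsold h != set0 by apply/set0Pn; exists j.
rewrite outcome_step //.
case: (j =P ord h) => [->|/eqP nj]; first by exists (w b h), (b (w b h) h); rewrite mem_head.
have Ek : #|unsold (upd h (ord h) (w b h))| = n by move: E; rewrite (card_upd (w b h) ne); case.
have ju' : j \in unsold (upd h (ord h) (w b h)) by rewrite unsold_upd in_setD1 nj ju.
have [k [p Hp]] := IH _ Ek j ju'.
by exists k, p; rewrite in_cons Hp orbT.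
Qed.

End Proofs.

Theorem mainTheorem5 (R : realType) (N M : finType) (v : N -> M -> R)
    (ord : alloc N M -> M) (tb : alloc N M -> M -> {set N} -> N) :
  (1 < #|N|)%N ->
  (forall i j, 0 <= v i j) ->
  valid_order ord ->
  max_tiebreak v tb ->
  (exists b : profile R N M, OC_SPE v ord tb b) /\
  (forall b : profile R N M, OC_SPE v ord tb b ->
     (forall j : M, exists w p, (j, w, p) \in outcome ord tb b (root_node N M)) /\
     (forall (j : M) (w : N) (p : R),
        (j, w, p) \in outcome ord tb b (root_node N M) ->
        (forall i, v i j <= v w j) /\
        (exists2 i, i != w & p = v i j) /\
        (forall i, i != w -> v i j <= p))).
Proof.
move=> hN hv hord htb; split; first by exists (bstar v ord); apply: bstar_OC.
move=> b hb; split.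
  move=> j; apply: (cover tb hord b (erefl #|unsold (root_node N M)|)).
  by rewrite /unsold !inE /root_node ffunE.
move=> j w p Hin.
have [_ H] := uniq_main hN hv hord htb hb (reach_root ord) erefl.
have [ov po] := H _ _ _ Hin.
have [k kn ok] := o_att hN hv w j.
split; last split.
- move=> i; case: (i =P w) => [->//|/eqP iw]; apply: le_trans ov; exact: o_ge.
- by exists k => //; rewrite po ok.
- by move=> i iw; rewrite po; apply: o_ge.
Qed.
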